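(* Let $j\ge2$, let $H$ be a graph, let $G=\mathsf{TS}_j(H)$, and let $x_Q$ be the vertex of $G$ corresponding to a $j$-clique $Q=\{a_1,\dots,a_j\}$ of $H$. Put $S:=\bigcap_{i=1}^j N_H(a_i)$ and $X:=H[S]$. Then the subgraph of $G$ induced by the neighborhood $N_G(x_Q)$ is isomorphic to the graph obtained from $j$ disjoint copies $X_1,\dots,X_j$ of $X$ (writing $s_i$ for the copy of $s\in S$ in $X_i$) by adding, for each $s\in S$, all edges among $s_1,\dots,s_j$; there are no other edges between different copies.
   Context: All graphs are finite, simple, undirected; $N_H(v)$ is the set of neighbors of $v$ in $H$ and $H[S]$ the induced subgraph. A $k$-clique of a graph $H$ is a set of $k$ pairwise adjacent vertices. For a graph $H$ and integer $k\ge1$, the Token Sliding graph $\mathsf{TS}_k(H)$ has as vertices the $k$-cliques of $H$, and two $k$-cliques $A,B$ are adjacent iff $A\setminus B=\{u\}$, $B\setminus A=\{v\}$ for some vertices $u,v$ with $uv\in E(H)$. *)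

(* Defs.v *)
(* A simple graph H is a finType T with a symmetric,
   irreflexive adjacency relation e : rel T. *)
From mathcomp Require Import all_boot.
Set Implicit Arguments. Unset Strict Implicit. Unset Printing Implicit Defensive.

Definition is_clique (T : finType) (e : rel T) (k : nat) (A : {set T}) : bool :=
  (#|A| == k) && [forall x in A, forall y in A, (x != y) ==> e x y].

Definition ts_adj (T : finType) (e : rel T) (A B : {set T}) : bool :=
  [exists u, exists v, [&& A :\: B == [set u], B :\: A == [set v] & e u v]].

Definition ts_vertices (T : finType) (e : rel T) (k : nat) : {set {set T}} :=
  [set A | is_clique e k A].

Definition ts_nbhd (T : finType) (e : rel T) (k : nat) (Q : {set T}) : {set {set T}} :=
  [set B in ts_vertices e k | ts_adj e Q B].

Definition nbhd (T : finType) (e : rel T) (v : T) : {set T} := [set w | e v w].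

Definition common_nbhd (T : finType) (e : rel T) (Q : {set T}) : {set T} :=
  \bigcap_(a in Q) nbhd e a.

(* Edges of the graph on k disjoint copies of X = H[S]: vertex (s,i) is the
   copy s_i of s in X_i; edges inside a copy are those of X, and s_i ~ s_l
   for i <> l; no other edges. *)
Definition copies_adj (T : finType) (e : rel T) (k : nat) (p q : T * 'I_k) : bool :=
  ((p.2 == q.2) && e p.1 q.1) || ((p.1 == q.1) && (p.2 != q.2)).

(* Main.v *)
Require Import Defs.
From mathcomp Require Import all_boot.
Set Implicit Arguments. Unset Strict Implicit.
Section S.
Variables (T : finType) (e : rel T).
Lemma diffB (Q : {set T}) u1 u2 v1 v2 : u1 \in Q -> u2 \in Q -> v1 \notin Q -> v2 \notin Q ->
  (v1 |: (Q :\ u1)) :\: (v2 |: (Q :\ u2)) =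
  (if v1 == v2 then set0 else [set v1]) :|: (if u1 == u2 then set0 else [set u2]).
Proof.
move=> u1Q u2Q v1Q v2Q; apply/setP=> x.
have [xQ|xQ] := boolP (x \in Q).
{ have xv1 : (x == v1) = false by apply/eqP=> h; rewrite -h xQ in v1Q.
  have xv2 : (x == v2) = false by apply/eqP=> h; rewrite -h xQ in v2Q.
  case: (eqVneq v1 v2) => [_|nv]; case: (eqVneq u1 u2) => [<-|nu];
   rewrite !inE xv1 xv2 xQ /= ?andbT; try by case: (x != u1).
  all: case: (eqVneq x u2) => [->|]; rewrite ?andbF //= ?(eq_sym u2) ?nu //. }
have xu1 : (x == u1) = false by apply/eqP=> h; rewrite h u1Q in xQ.
  have xu2 : (x == u2) = false by apply/eqP=> h; rewrite h u2Q in xQ.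
  rewrite !inE (negbTE xQ) xu2 /= !andbF !orbF.
  case: (eqVneq x v1) => [xv1|xv1]; case: (eqVneq x v2) => [xv2|xv2] /=.
  + by subst; rewrite eqxx /=; case: ifP; rewrite ?inE.
  all: try subst.
  by rewrite (negbTE xv2) !inE eqxx.
  by case: ifP; case: ifP; rewrite ?inE ?(negbTE xv1) ?xu2.
  by case: ifP; case: ifP; rewrite ?inE ?(negbTE xv1) ?xu2.
Qed.
Hypotheses (e_sym : symmetric e) (e_irr : irreflexive e).

Lemma inS (Q : {set T}) v : (v \in common_nbhd e Q) = [forall a in Q, e a v].
Proof. apply/bigcapP/forall_inP => H a /H; by rewrite inE. Qed.

Lemma clique_e k (A : {set T}) x y : is_clique e k A -> x \in A -> y \in A -> x != y -> e x y.
Proof.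
case/andP=> _ /forall_inP H xA yA nxy.
by move/forall_inP: (H x xA) => /(_ y yA); rewrite nxy.
Qed.

Lemma notinQ (Q : {set T}) v : v \in common_nbhd e Q -> v \notin Q.
Proof. rewrite inS => /forall_inP H; apply/negP => /H; by rewrite e_irr. Qed.

Lemma inSe (Q : {set T}) v a : v \in common_nbhd e Q -> a \in Q -> e a v.
Proof. by rewrite inS => /forall_inP H /H. Qed.

Lemma diff1 (Q : {set T}) u v : u \in Q -> v \notin Q ->
  (v |: (Q :\ u)) :\: Q = [set v] /\ Q :\: (v |: (Q :\ u)) = [set u].
Proof.
move=> uQ vQ; split; apply/setP=> x; rewrite !inE.
  case: (eqVneq x v) => [->|]; rewrite ?(negbTE vQ) //= => _; by case: (x \in Q); rewrite ?andbF.
case: (eqVneq x u) => [->|xu].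
  have uv : (u == v) = false by apply/eqP => h; rewrite -h uQ in vQ.
  by rewrite uQ uv.
case: (eqVneq x v) => [->|] //=; by case: (x \in Q).
Qed.

Lemma ts_adj_eq (A B : {set T}) a b : A :\: B = [set a] -> B :\: A = [set b] -> ts_adj e A B = e a b.
Proof.
rewrite /ts_adj => -> ->; apply/existsP/idP.
  by case=> u /existsP [v /and3P [/eqP/set1_inj <- /eqP/set1_inj <-]].
by move=> eab; exists a; apply/existsP; exists b; rewrite !eqxx.
Qed.

Lemma ts_adj_no (A B : {set T}) : (forall w, A :\: B != [set w]) -> ts_adj e A B = false.
Proof.
move=> H; apply/negbTE/negP => /existsP [u /existsP [v /and3P [h _ _]]].
by move: (H u); rewrite h.
Qed.

Lemma nbhdP j (Q B : {set T}) : is_clique e j Q ->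
  reflect (exists u v, [/\ u \in Q, v \in common_nbhd e Q & B = v |: (Q :\ u)])
          (B \in ts_nbhd e j Q).
Proof.
move=> hQ; apply: (iffP idP).
  rewrite /ts_nbhd !inE => /andP [cB /existsP [u /existsP [v /and3P [/eqP h1 /eqP h2 euv]]]].
  have : u \in Q :\: B by rewrite h1 set11.
  rewrite inE => /andP [uB uQ].
  have : v \in B :\: Q by rewrite h2 set11.
  rewrite inE => /andP [vQ vB].
  have defB : B = v |: (Q :\ u).
    apply/setP => x.
    have H1 := congr1 (fun S : {set T} => x \in S) h1; have H2 := congr1 (fun S : {set T} => x \in S) h2.
    move: H1 H2; rewrite !inE /=.
    case xB: (x \in B); case xQ: (x \in Q) => /= H1 H2; by rewrite -?H1 -?H2 ?andbF ?orbF.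
  exists u, v; split => //.
  rewrite inS; apply/forall_inP => a aQ.
  case: (eqVneq a u) => [->|au]; first by [].
  apply: (clique_e cB) => //; first by rewrite defB !inE au aQ orbT.
  by apply/eqP => h; move: aQ; rewrite h (negbTE vQ).
case=> u [v [uQ vS ->]].
have vQ := notinQ vS.
have [d1 d2] := diff1 uQ vQ.
rewrite /ts_nbhd !inE; apply/andP; split; last first.
  apply/existsP; exists u; apply/existsP; exists v; rewrite d1 d2 !eqxx /=.
  exact: inSe vS uQ.
apply/andP; split.
  case/andP: (hQ) => /eqP <- _.
  by rewrite cardsU1 !inE (negbTE vQ) andbF /= [in X in _ == X](cardsD1 u Q) uQ.
apply/forall_inP => x xB; apply/forall_inP => y yB; apply/implyP => nxy.
move: xB yB; rewrite !inE.
case/orP=> [/eqP xv|/andP [_ xQ]]; case/orP=> [/eqP yv|/andP [_ yQ]].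
- by rewrite xv yv eqxx in nxy.
- by rewrite xv e_sym (inSe vS yQ).
- by rewrite yv (inSe vS xQ).
- exact: clique_e hQ xQ yQ nxy.
Qed.
End S.

Theorem lemma3p15 (T : finType) (e : rel T)
  (e_sym : symmetric e) (e_irr : irreflexive e)
  (j : nat) (hj : 2 <= j) (Q : {set T}) (hQ : is_clique e j Q) :
  exists f : {set T} -> T * 'I_j,
    [/\ {in ts_nbhd e j Q &, injective f},
        f @: ts_nbhd e j Q = [set p | p.1 \in common_nbhd e Q]
      & {in ts_nbhd e j Q &, forall A B,
           ts_adj e A B = copies_adj e (f A) (f B)}].
Proof.
case: j hj hQ => [//|j] hj hQ.
have cQ : #|Q| = j.+1 by case/andP: hQ => /eqP.
have [a0 _] : exists a, a \in Q by apply/card_gt0P; rewrite cQ.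
pose s := enum Q.
have sz : size s = j.+1 by rewrite -cardE.
pose idx (u : T) : 'I_j.+1 := inord (index u s).
have idxK u : u \in Q -> nth a0 s (idx u) = u.
  move=> uQ; rewrite inordK ?nth_index ?mem_enum // -sz index_mem mem_enum //.
have idx_inj u1 u2 : u1 \in Q -> u2 \in Q -> idx u1 = idx u2 -> u1 = u2.
  by move=> h1 h2 h; rewrite -(idxK _ h1) -(idxK _ h2) h.
pose f (B : {set T}) := (odflt a0 [pick v in B :\: Q], idx (odflt a0 [pick u in Q :\: B])).
have fB u v : u \in Q -> v \in common_nbhd e Q -> f (v |: (Q :\ u)) = (v, idx u).
  move=> uQ vS; have [d1 d2] := diff1 uQ (notinQ e_irr vS).
  by rewrite /f d1 d2 !pick_set1.
exists f; split.
- move=> A B /(nbhdP e_sym e_irr _ hQ) [u1 [v1 [u1Q v1S ->]]] /(nbhdP e_sym e_irr _ hQ) [u2 [v2 [u2Q v2S ->]]].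
  rewrite fB // fB // => -[-> /idx_inj]; move=> /(_ u1Q u2Q) ->; by [].
- apply/setP => -[v i]; rewrite inE /=; apply/imsetP/idP.
    by case=> B /(nbhdP e_sym e_irr _ hQ) [u [v' [uQ vS ->]]]; rewrite fB // => -[-> _].
  move=> vS.
  have iQ : nth a0 s i \in Q by rewrite -mem_enum mem_nth // sz.
  exists (v |: (Q :\ nth a0 s i)); first by apply/(nbhdP e_sym e_irr _ hQ); exists (nth a0 s i), v.
  rewrite fB //; congr pair; apply/val_inj => /=.
  by rewrite inordK ?index_uniq ?enum_uniq // -?sz ?index_mem ?mem_nth ?sz.
move=> A B /(nbhdP e_sym e_irr _ hQ) [u1 [v1 [u1Q v1S ->]]] /(nbhdP e_sym e_irr _ hQ) [u2 [v2 [u2Q v2S ->]]].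
have v1Q := notinQ e_irr v1S; have v2Q := notinQ e_irr v2S.
rewrite fB // fB // /copies_adj /=.
have D12 := diffB u1Q u2Q v1Q v2Q; have D21 := diffB u2Q u1Q v2Q v1Q.
case: (eqVneq v1 v2) => [ev|nv]; case: (eqVneq u1 u2) => [eu|nu].
- subst; rewrite ts_adj_no ?e_irr ?eqxx //= => w.
  rewrite D12 !eqxx setU0; apply/eqP => h; by have := set11 w; rewrite -h inE.
- subst; rewrite (@ts_adj_eq _ e _ _ u2 u1).
  + have -> : (idx u1 == idx u2) = false by apply/eqP => /(idx_inj _ _ u1Q u2Q) h; rewrite h eqxx in nu.
    by rewrite (clique_e hQ u2Q u1Q) // eq_sym.
  + by rewrite D12 eqxx (negbTE nu) set0U.
  + by rewrite D21 eqxx eq_sym (negbTE nu) set0U.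
- subst; rewrite (@ts_adj_eq _ e _ _ v1 v2).
  + by rewrite eqxx /= orbF.
  + by rewrite D12 eqxx (negbTE nv) setU0.
  + by rewrite D21 eqxx eq_sym (negbTE nv) setU0.
- have -> : (idx u1 == idx u2) = false by apply/eqP => /(idx_inj _ _ u1Q u2Q) h; rewrite h eqxx in nu.
  rewrite /= ts_adj_no // => w.
  rewrite D12 (negbTE nv) (negbTE nu); apply/eqP => h.
  have := cards2 v1 u2; rewrite [[set v1; u2]]h cards1.
  have -> : v1 != u2 by apply/eqP => h'; rewrite h' u2Q in v1Q.
  by [].
Qed.
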